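(* Fix an integer $b\ge2$ and let $X$ be the negative definite plumbed 4-manifold with boundary $I_{30(b-2)+19}=Y(b;(2,1),(3,2),(5,1))$ whose plumbing graph has vertices $v_1,\dots,v_5$: $v_5$ central of weight $-b$; $v_1$ of weight $-2$ adjacent only to $v_5$; $v_3$ of weight $-2$ adjacent to $v_5$ and $v_2$; $v_2$ of weight $-2$ adjacent only to $v_3$; $v_4$ of weight $-5$ adjacent only to $v_5$. Let $Q$ be its intersection form in the basis $v_1,\dots,v_5$, let $Q^n$ be the orthogonal sum of $n$ copies, with basis $v^i_1,\dots,v^i_5$ for the $i$-th copy. If $\rho$ is a lattice embedding of $Q^n$ into the standard negative definite lattice $(\mathbb{Z}^{5n},\langle-1\rangle^{5n})$ with standard basis $e_1,\dots,e_{5n}$, then, up to automorphisms of the standard lattice, for $i=1,\dots,n$: $\rho(v_1^i)=e_{1+5(i-1)}-e_{2+5(i-1)}$, $\rho(v_2^i)=e_{3+5(i-1)}-e_{4+5(i-1)}$, $\rho(v_3^i)=e_{4+5(i-1)}-e_{5+5(i-1)}$, and $\rho(v_4^i)=\pm(e_{1+5(\sigma_1(i)-1)}+e_{2+5(\sigma_1(i)-1)})\pm(e_{3+5(\sigma_2(i)-1)}+e_{4+5(\sigma_2(i)-1)}+e_{5+5(\sigma_2(i)-1)})$, for some permutations $\sigma_1,\sigma_2$ of $\{1,\dots,n\}$.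
   Context: $(\mathbb{Z}^{5n},\langle-1\rangle^{5n})$ denotes $\mathbb{Z}^{5n}$ with $e_i\cdot e_j=-\delta_{ij}$; a lattice embedding is an injective homomorphism preserving the pairing. In the intersection form, $v_j\cdot v_j$ is the weight and $v_j\cdot v_k=1$ if adjacent, $0$ otherwise. *)

(* Defs.v *)
From mathcomp Require Import all_boot all_order all_algebra all_fingroup.
From mathcomp Require Import zify.
Set Implicit Arguments. Unset Strict Implicit. Unset Printing Implicit Defensive.
Import GRing.Theory Num.Theory.
Local Open Scope ring_scope.

Definition std_form (m : nat) (x y : 'rV[int]_m) : int :=
  - \sum_(t < m) x 0 t * y 0 t.

Definition std_e (m : nat) (t : 'I_m) : 'rV[int]_m := delta_mx 0 t.

Definition std_lattice_aut (m : nat) (P : 'M[int]_m) : Prop :=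
  bijective (fun x : 'rV[int]_m => x *m P) /\
  forall x y : 'rV[int]_m, std_form (x *m P) (y *m P) = std_form x y.

(* Intersection form Q of the plumbing, basis v_1..v_5 indexed 0..4:
   weights -2,-2,-2,-5,-b; edges v1-v5, v3-v5, v2-v3, v4-v5. *)
Definition plumbQ (b : nat) : 'M[int]_5 :=
  \matrix_(k < 5, l < 5)
    if k == l then
      (if val k == 3%N then -5 else if val k == 4%N then - (b%:Z) else -2)
    else
      (if [|| (val k == 0%N) && (val l == 4%N), (val k == 4%N) && (val l == 0%N),
              (val k == 2%N) && (val l == 4%N), (val k == 4%N) && (val l == 2%N),
              (val k == 1%N) && (val l == 2%N), (val k == 2%N) && (val l == 1%N),
              (val k == 3%N) && (val l == 4%N) | (val k == 4%N) && (val l == 3%N)]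
       then 1 else 0).

Definition lattice_embedding_Qn (b n m : nat)
    (rho : 'I_n -> 'I_5 -> 'rV[int]_m) : Prop :=
  (forall c : 'I_n -> 'I_5 -> int,
      \sum_(i < n) \sum_(k < 5) c i k *: rho i k = 0 -> forall i k, c i k = 0) /\
  (forall (i j : 'I_n) (k l : 'I_5),
      std_form (rho i k) (rho j l) = if i == j then plumbQ b k l else 0).

Lemma eidx_proof (n : nat) (i : 'I_n) (k : 'I_5) : (k + 5 * i < 5 * n)%N.
Proof. case: i k => i Hi [k Hk] /=; lia. Qed.

(* 0-based index of e_{(k+1) + 5 i} (i.e. e_{k' + 5(i'-1)} with i' = i+1, k' = k+1) *)
Definition eidx (n : nat) (i : 'I_n) (k : 'I_5) : 'I_(5 * n) :=
  Ordinal (eidx_proof i k).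

Definition sgn (s : bool) : int := (-1) ^+ s.

Definition o0 : 'I_5 := @Ordinal 5 0 isT.
Definition o1 : 'I_5 := @Ordinal 5 1 isT.
Definition o2 : 'I_5 := @Ordinal 5 2 isT.
Definition o3 : 'I_5 := @Ordinal 5 3 isT.
Definition o4 : 'I_5 := @Ordinal 5 4 isT.

(* Main.v *)
Set Warnings "-notation-overridden,-ambiguous-paths,-deprecated".
Require Import Defs.
From mathcomp Require Import all_boot all_order all_algebra all_fingroup.
From mathcomp Require Import zify.
Set Implicit Arguments. Unset Strict Implicit. Unset Printing Implicit Defensive.
Import GRing.Theory Num.Theory.
Local Open Scope ring_scope.

Lemma sq_ge0 (x : int) : 0 <= x * x.
Proof. nia. Qed.

Lemma sq_one (x : int) : x * x = 1 -> x = 1 \/ x = -1.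
Proof. nia. Qed.

Lemma sq_ne0 (x : int) : x != 0 -> 1 <= x * x.
Proof. move/eqP; nia. Qed.

Lemma sq_le2 (y : int) : y != 0 -> y * y <= 2 -> y * y = 1.
Proof.
move=> /eqP y0 h; have [h'|h'] : (1 <= y) \/ (y <= -1) by lia.
  have : y <= 1 by nia.
  nia.
have : -1 <= y by nia.
nia.
Qed.

Lemma sq0 (I : finType) (P : pred I) (x : I -> int) :
  \sum_(t | P t) x t * x t = 0 -> forall t, P t -> x t = 0.
Proof.
move=> H t Pt; have := psumr_eq0P (fun t _ => sq_ge0 (x t)) H Pt; nia.
Qed.

Lemma exists_nz (I : finType) (P : pred I) (x : I -> int) :
  \sum_(t | P t) x t * x t != 0 -> exists2 t, P t & x t != 0.
Proof.
move=> H; case: (pickP (fun t => P t && (x t != 0))) => [t /andP[]|H0].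
  by exists t.
case/eqP: H; rewrite big1 // => t Pt; have := H0 t; rewrite Pt /=.
by move/negbFE/eqP ->.
Qed.

Lemma sq1 (I : finType) (P : pred I) (x : I -> int) :
  \sum_(t | P t) x t * x t = 1 ->
  exists a, [/\ P a, x a * x a = 1 & forall t, P t -> t != a -> x t = 0].
Proof.
move=> H; have [a Pa xa] : exists2 t, P t & x t != 0 by apply: exists_nz; rewrite H.
move: H; rewrite (bigD1 a) //= => H.
have h1 := sq_ne0 xa.
have h2 : 0 <= \sum_(t | P t && (t != a)) x t * x t by apply: sumr_ge0 => t _; exact: sq_ge0.
move: H h1 h2; set A := x a * x a; set B := \sum_(_ | _) _ => H h1 h2.
have e1 : A = 1.
  lia.
have eB : B = 0 by lia.
exists a; split => // t Pt ta; apply: (sq0 eB); by rewrite Pt ta.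
Qed.

Lemma norm2_at (I : finType) (u : I -> int) t :
  \sum_s u s * u s = 2 -> u t != 0 ->
  exists b, [/\ b != t, u t * u t = 1, u b * u b = 1 &
             forall s, s != t -> s != b -> u s = 0].
Proof.
move=> H ut; move: H; rewrite (bigD1 t) //= => H.
have h1 := sq_ne0 ut.
have h2 : 0 <= \sum_(s | s != t) u s * u s by apply: sumr_ge0 => s _; exact: sq_ge0.
move: H h2; set B := \sum_(_ | _) _ => H h2.
have e1 : u t * u t = 1.
  have := sq_le2 ut; lia.
have eB : B = 1 by lia.
have [b [bt ub hb]] := sq1 eB.
by exists b; split => // s st sb; apply: hb.
Qed.

Lemma sum2pt (I : finType) (f : I -> int) a b : a != b ->
  (forall s, s != a -> s != b -> f s = 0) -> \sum_s f s = f a + f b.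
Proof.
move=> ab H; rewrite (bigD1 a) //= (bigD1 b) /=; last by rewrite eq_sym.
rewrite big1 ?addr0 // => s /andP[sa sb]; exact: H.
Qed.

Lemma sum1pt (I : finType) (f : I -> int) a :
  (forall s, s != a -> f s = 0) -> \sum_s f s = f a.
Proof.
move=> H; rewrite (bigD1 a) //= big1 ?addr0 // => s sa; exact: H.
Qed.

Definition dotf m (u w : 'I_m -> int) := \sum_s u s * w s.

Lemma diff_even (u w : int) : (u = 0 /\ w = 0) \/ (u * u = 1 /\ w * w = 1) ->
  u - w = 2 * (if u == w then 0 else u).
Proof.
case=> [[-> ->]|[/sq_one hu /sq_one hw]]; first by rewrite eqxx.
case: eqP => [->|ne]; first lia.
by case: hu => hu; case: hw => hw; rewrite hu hw in ne *; lia.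
Qed.

Lemma no_overlap m (u w z : 'I_m -> int) t :
  dotf u u = 2 -> dotf w w = 2 -> dotf u w = 0 -> dotf z u + dotf z w = -1 ->
  u t != 0 -> w t != 0 -> False.
Proof.
move=> uu ww uw zuw ut wt.
have [b [bt ut1 ub1 uz]] := norm2_at uu ut.
have e : dotf u w = u t * w t + u b * w b.
  have tb : t != b by rewrite eq_sym.
  rewrite /dotf (sum2pt (f := fun s => u s * w s) tb) // => s st sb.
  by rewrite uz // mul0r.
have wb : w b != 0.
  apply/eqP => wb0; move: e; rewrite uw wb0 mulr0 addr0 => /esym/eqP.
  by rewrite mulf_eq0 (negbTE ut) (negbTE wt).
have [b' [b't wt1 wb1 wz]] := norm2_at ww wt.
have bb' : b = b'.
  apply/eqP; apply/negPn/negP => nb; move/eqP: wb; apply; exact: wz.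
subst b'.
have hs : forall s, u s - w s = 2 * (if u s == w s then 0 else u s).
  move=> s; apply: diff_even.
  case: (eqVneq s t) => [->|st]; first by right.
  case: (eqVneq s b) => [->|sb]; first by right.
  by left; rewrite uz // wz.
have : dotf z u - dotf z w = 2 * \sum_s z s * (if u s == w s then 0 else u s).
  rewrite /dotf -sumrB mulr_sumr; apply: eq_bigr => s _.
  by rewrite -mulrBr hs; lia.
lia.
Qed.

Lemma exists_nzf (I : finType) (f : I -> int) :
  \sum_t f t != 0 -> exists t, f t != 0.
Proof.
move=> H; case: (pickP (fun t => f t != 0)) => [t ft|H0]; first by exists t.
case/eqP: H; rewrite big1 // => t _; have := H0 t; by move/negbFE/eqP.
Qed.

Lemma sq1_nz (x : int) : x * x = 1 -> x != 0.
Proof. by move=> h; apply/eqP => x0; move: h; rewrite x0 mul0r. Qed.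

Definition formH (b n : nat) (rho : 'I_n -> 'I_5 -> 'rV[int]_(5 * n)) :=
  forall i j k l, std_form (rho i k) (rho j l) = if i == j then plumbQ b k l else 0.

Lemma Dsame (b n : nat) (rho : 'I_n -> 'I_5 -> 'rV[int]_(5 * n)) (H : formH b rho) i k l :
  dotf (rho i k 0) (rho i l 0) = - plumbQ b k l.
Proof. by have := H i i k l; rewrite eqxx /std_form /dotf => <-; rewrite opprK. Qed.

Lemma Ddiff (b n : nat) (rho : 'I_n -> 'I_5 -> 'rV[int]_(5 * n)) (H : formH b rho) i j k l : i != j ->
  dotf (rho i k 0) (rho j l 0) = 0.
Proof.
move=> ij; have := H i j k l; rewrite (negbTE ij) /std_form /dotf => /eqP.
by rewrite oppr_eq0 => /eqP.
Qed.

Lemma ord5_cases (k : 'I_5) : k = o0 \/ k = o1 \/ k = o2 \/ k = o3 \/ k = o4.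
Proof.
case: k => [[|[|[|[|[|k]]]]] Hk].
- by left; apply/val_inj.
- by right; left; apply/val_inj.
- by right; right; left; apply/val_inj.
- by right; right; right; left; apply/val_inj.
- by right; right; right; right; apply/val_inj.
- by [].
Qed.

Ltac pq := rewrite /plumbQ mxE /=; try lia.

Lemma cross (b n : nat) (rho : 'I_n -> 'I_5 -> 'rV[int]_(5 * n)) (H : formH b rho) i j k l t : i != j ->
  (val k < 3)%N -> (val l < 3)%N ->
  rho i k 0 t != 0 -> rho j l 0 t != 0 -> False.
Proof.
move=> ij hk hl ut wt.
have Dk : forall k, (val k < 3)%N -> dotf (rho i k 0) (rho i k 0) = 2.
  move=> k' hk'; rewrite (Dsame H); case: (ord5_cases k') hk' => [->|[->|[->|[->|->]]]] //; pq.
have Dl : dotf (rho j l 0) (rho j l 0) = 2.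
  rewrite (Dsame H); case: (ord5_cases l) hl => [->|[->|[->|[->|->]]]] //; pq.
have uw := Ddiff H k l ij.
move: uw ut; case: (ord5_cases k) hk => [->|[->|[->|[->|->]]]] // _ uw ut.
- apply: (no_overlap (z := rho i o4 0)) ut wt; [exact: Dk|exact: Dl|exact: uw|].
  by rewrite (Dsame H) (Ddiff H _ _ ij); pq.
- apply: (no_overlap (z := rho i o2 0)) ut wt; [exact: Dk|exact: Dl|exact: uw|].
  by rewrite (Dsame H) (Ddiff H _ _ ij); pq.
- apply: (no_overlap (z := rho i o4 0)) ut wt; [exact: Dk|exact: Dl|exact: uw|].
  by rewrite (Dsame H) (Ddiff H _ _ ij); pq.
Qed.

Definition local_prop m (v1 v2 v3 : 'I_m -> int) (s : 'I_5 -> 'I_m) : Prop :=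
 [/\ injective s,
   [/\ v1 (s o0) * v1 (s o0) = 1, v1 (s o1) * v1 (s o1) = 1 &
       forall t, t != s o0 -> t != s o1 -> v1 t = 0],
   [/\ v2 (s o2) * v2 (s o2) = 1, v2 (s o3) * v2 (s o3) = 1 &
       forall t, t != s o2 -> t != s o3 -> v2 t = 0] &
   [/\ v3 (s o4) * v3 (s o4) = 1, v2 (s o3) * v3 (s o3) = -1 &
       forall t, t != s o3 -> t != s o4 -> v3 t = 0]].

Lemma nz_of_sq (x : int) : x * x != 0 -> x != 0.
Proof. by apply: contraNneq => ->; rewrite mul0r. Qed.

Lemma local_struct (b n : nat) (rho : 'I_n -> 'I_5 -> 'rV[int]_(5 * n))
  (H : formH b rho) i :
  exists s, local_prop (rho i o0 0) (rho i o1 0) (rho i o2 0) s.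
Proof.
set v1 := rho i o0 0; set v2 := rho i o1 0; set v3 := rho i o2 0.
have D11 : dotf v1 v1 = 2 by rewrite (Dsame H); pq.
have D22 : dotf v2 v2 = 2 by rewrite (Dsame H); pq.
have D33 : dotf v3 v3 = 2 by rewrite (Dsame H); pq.
have D12 : dotf v1 v2 = 0 by rewrite (Dsame H); pq.
have D13 : dotf v1 v3 = 0 by rewrite (Dsame H); pq.
have D23 : dotf v2 v3 = -1 by rewrite (Dsame H); pq.
have D21 : dotf v2 v1 = 0 by rewrite (Dsame H); pq.
have D51 : dotf (rho i o4 0) v1 = -1 by rewrite (Dsame H); pq.
have D52 : dotf (rho i o4 0) v2 = 0 by rewrite (Dsame H); pq.
have no12 : forall t, v1 t != 0 -> v2 t != 0 -> False.
  move=> t h1 h2; apply: (no_overlap (z := rho i o4 0)) h1 h2 => //.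
  by rewrite D51 D52.
have no13 : forall t, v1 t != 0 -> v3 t != 0 -> False.
  move=> t h1 h2; apply: (no_overlap (z := v2)) h1 h2 => //.
  by rewrite D21 D23.
have [a ha] : exists t, v1 t * v1 t != 0.
  by apply: (@exists_nzf _ (fun t => v1 t * v1 t)); rewrite [X in X != 0]D11.
have [b' [ba v1a v1b v1z]] := norm2_at D11 (nz_of_sq ha).
have [d hd] : exists t, v2 t * v3 t != 0.
  by apply: (@exists_nzf _ (fun t => v2 t * v3 t)); rewrite [X in X != 0]D23.
have v2d : v2 d != 0 by apply: contraNneq hd => ->; rewrite mul0r.
have v3d : v3 d != 0 by apply: contraNneq hd => ->; rewrite mulr0.
have [c [cd v2d1 v2c v2z]] := norm2_at D22 v2d.
have [f [fd v3d1 v3f v3z]] := norm2_at D33 v3d.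
have cf : c != f.
  apply/eqP => ecf; subst f.
  have dc : d != c by rewrite eq_sym.
  have : dotf v2 v3 = v2 d * v3 d + v2 c * v3 c.
    rewrite /dotf (sum2pt (f := fun s => v2 s * v3 s) dc) // => s sd sc.
    by rewrite v2z // mul0r.
  rewrite D23.
  by case/sq_one: v2d1 => ->; case/sq_one: v3d1 => ->; case/sq_one: v2c => ->;
     case/sq_one: v3f => ->; lia.
have e23 : v2 d * v3 d = -1.
  rewrite -D23 /dotf (sum1pt (f := fun s => v2 s * v3 s) (a := d)) // => s sd.
  case: (eqVneq s c) => [->|sc]; last by rewrite v2z // mul0r.
  by rewrite (v3z c) ?mulr0 // eq_sym.
pose s (k : 'I_5) := nth a [:: a; b'; c; d; f] k.
have nz1 : forall x : int, x * x = 1 -> x != 0 by move=> x; exact: sq1_nz.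
have n12 : forall x y, v1 x != 0 -> v2 y != 0 -> x != y.
  by move=> x y h1 h2; apply/eqP => e; subst y; exact: no12 h1 h2.
have n13 : forall x y, v1 x != 0 -> v3 y != 0 -> x != y.
  by move=> x y h1 h2; apply/eqP => e; subst y; exact: no13 h1 h2.
have ab : a != b' by rewrite eq_sym.
have df : d != f by rewrite eq_sym.
have uL : uniq [:: a; b'; c; d; f].
  rewrite /= !inE !negb_or ab cd cf df.
  have h1a := nz1 _ v1a; have h1b := nz1 _ v1b; have h2c := nz1 _ v2c.
  have h2d := nz1 _ v2d1; have h3f := nz1 _ v3f.
  by rewrite (n12 a c) ?(n12 a d) ?(n13 a f) ?(n12 b' c) ?(n12 b' d) ?(n13 b' f).
exists s; split => //=.
- move=> k l /eqP; rewrite /s nth_uniq ?ltn_ord //.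
  by move/eqP/val_inj.
- by rewrite /s /=; split => // t t2 t3; exact: v2z.
Qed.

Lemma deci_proof n (c : 'I_(5 * n)) : (c %/ 5 < n)%N.
Proof. have := ltn_ord c; move: (nat_of_ord c) => x h; rewrite ltn_divLR //; lia. Qed.

Definition deci n (c : 'I_(5 * n)) : 'I_n := Ordinal (deci_proof c).
Definition deck n (c : 'I_(5 * n)) : 'I_5 := Ordinal (@ltn_pmod c 5 isT).

Lemma eidx_dec n (c : 'I_(5 * n)) : eidx (deci c) (deck c) = c.
Proof. apply/val_inj => /=; move: (nat_of_ord c) => x; lia. Qed.

Lemma deci_eidx n (i : 'I_n) k : deci (eidx i k) = i.
Proof.
apply/val_inj => /=; have := ltn_ord k; move: (nat_of_ord k) (nat_of_ord i) => x y; lia.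
Qed.

Lemma deck_eidx n (i : 'I_n) k : deck (eidx i k) = k.
Proof.
apply/val_inj => /=; have := ltn_ord k; move: (nat_of_ord k) (nat_of_ord i) => x y; lia.
Qed.

Lemma eidx_eq n (i j : 'I_n) k l : (eidx i k == eidx j l) = (i == j) && (k == l).
Proof.
apply/eqP/andP => [e|[/eqP -> /eqP ->] //].
by split; apply/eqP; [rewrite -(deci_eidx i k) e deci_eidx | rewrite -(deck_eidx i k) e deck_eidx].
Qed.

Lemma sum_eidx n (F : 'I_(5 * n) -> int) :
  \sum_c F c = \sum_(j < n) \sum_(k < 5) F (eidx j k).
Proof.
rewrite pair_big /= (reindex (fun p : 'I_n * 'I_5 => eidx p.1 p.2)) //.
exists (fun c => (deci c, deck c)) => [[j k] _ | c _] /=.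
  by rewrite deci_eidx deck_eidx.
by rewrite eidx_dec.
Qed.

Lemma sum5 (F : 'I_5 -> int) :
  \sum_(k < 5) F k = F o0 + F o1 + F o2 + F o3 + F o4.
Proof.
rewrite !big_ord_recl big_ord0 addr0 !addrA.
by congr (_ + _ + _ + _ + _); apply/f_equal/val_inj.
Qed.

Definition Pm m (pi : 'S_m) (e : 'I_m -> int) : 'M[int]_m :=
  \matrix_(r, c) (if r == pi c then e c else 0).

Lemma mulPm m (pi : 'S_m) e (x : 'rV[int]_m) c :
  (x *m Pm pi e) 0 c = x 0 (pi c) * e c.
Proof.
rewrite mxE (bigD1 (pi c)) //= mxE eqxx big1 ?addr0 // => r rne.
by rewrite mxE (negbTE rne) mulr0.
Qed.

Lemma dot_Pm m (pi : 'S_m) e (x w : 'rV[int]_m) :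
  (forall c, e c * e c = 1) ->
  dotf ((x *m Pm pi e) 0) ((w *m Pm pi e) 0) = dotf (x 0) (w 0).
Proof.
move=> he; rewrite /dotf [RHS](reindex_inj (@perm_inj _ pi)).
apply: eq_bigr => c _; rewrite !mulPm.
by rewrite mulrAC -!mulrA he mulr1.
Qed.

Lemma aut_Pm m (pi : 'S_m) e : (forall c, e c * e c = 1) -> std_lattice_aut (Pm pi e).
Proof.
move=> he; split; last first.
  move=> x y; rewrite /std_form; congr (- _); exact: dot_Pm.
exists (fun y : 'rV[int]_m => y *m Pm (pi^-1)%g (fun c => e ((pi^-1)%g c))) => x; apply/rowP => c;
  rewrite !mulPm.
  by rewrite permKV -mulrA he mulr1.
by rewrite permK -mulrA he mulr1.
Qed.

Definition shape n (y : 'I_(5 * n) -> int) :=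
  [/\ forall j, y (eidx j o1) = y (eidx j o0),
      forall j, y (eidx j o3) = y (eidx j o2) &
      forall j, y (eidx j o4) = y (eidx j o2)].

Lemma dot_shape n (y y' : 'I_(5 * n) -> int) : shape y -> shape y' ->
  dotf y y' = 2 * \sum_j y (eidx j o0) * y' (eidx j o0)
            + 3 * \sum_j y (eidx j o2) * y' (eidx j o2).
Proof.
case=> h1 h2 h3 [h1' h2' h3'].
rewrite /dotf sum_eidx !mulr_sumr -big_split /=; apply: eq_bigr => j _.
rewrite sum5 h1 h2 h3 h1' h2' h3'; lia.
Qed.

Lemma sq1T (I : finType) (x : I -> int) :
  \sum_t x t * x t = 1 ->
  exists a, x a * x a = 1 /\ forall t, t != a -> x t = 0.
Proof. by move=> /sq1 [a [_ h1 h2]]; exists a; split => // t; apply: h2. Qed.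

Definition shdata n (y : 'I_(5 * n) -> int) (j1 j2 : 'I_n) :=
  [/\ y (eidx j1 o0) * y (eidx j1 o0) = 1, forall j, j != j1 -> y (eidx j o0) = 0,
      y (eidx j2 o2) * y (eidx j2 o2) = 1 & forall j, j != j2 -> y (eidx j o2) = 0].

Lemma v4_shape n (y : 'I_(5 * n) -> int) : shape y -> dotf y y = 5 ->
  exists j1 j2, shdata y j1 j2.
Proof.
move=> sh; rewrite dot_shape //.
have hA : 0 <= \sum_j y (eidx j o0) * y (eidx j o0) by apply: sumr_ge0 => j _; exact: sq_ge0.
have hB : 0 <= \sum_j y (eidx j o2) * y (eidx j o2) by apply: sumr_ge0 => j _; exact: sq_ge0.
move: hA hB; set A := \sum_j _; set B := \sum_j _ => hA hB h.
have eA : A = 1 by lia.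
have eB : B = 1 by lia.
have [j1 [a1 a2]] := sq1T eA.
have [j2 [b1 b2]] := sq1T eB.
by exists j1, j2; split.
Qed.

Lemma sig_inj n (y y' : 'I_(5 * n) -> int) j1 j2 j1' j2' :
  shape y -> shape y' -> shdata y j1 j2 -> shdata y' j1' j2' -> dotf y y' = 0 ->
  j1 != j1' /\ j2 != j2'.
Proof.
move=> sh sh' [a1 a2 b1 b2] [a1' a2' b1' b2']; rewrite dot_shape //.
rewrite (sum1pt (f := fun j => y (eidx j o0) * y' (eidx j o0)) (a := j1)); last first.
  by move=> j jn; rewrite a2 // mul0r.
rewrite (sum1pt (f := fun j => y (eidx j o2) * y' (eidx j o2)) (a := j2)); last first.
  by move=> j jn; rewrite b2 // mul0r.
move=> /= h.
have hA : y' (eidx j1 o0) = 0 \/ y' (eidx j1 o0) * y' (eidx j1 o0) = 1.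
  by case: (eqVneq j1 j1') => [->|ne]; [right | left; apply: a2'].
have hB : y' (eidx j2 o2) = 0 \/ y' (eidx j2 o2) * y' (eidx j2 o2) = 1.
  by case: (eqVneq j2 j2') => [->|ne]; [right | left; apply: b2'].
split; apply/eqP => e; subst.
- move: h; have [->|->] := sq_one a1; have [->|->] := sq_one a1';
  have [->|->] := sq_one b1; case: hB => [->|/sq_one [->|->]]; lia.
- move: h; have [->|->] := sq_one b1; have [->|->] := sq_one b1';
  have [->|->] := sq_one a1; case: hA => [->|/sq_one [->|->]]; lia.
Qed.

Lemma dot_ee m (y : 'I_m -> int) p q :
  dotf y ((std_e p - std_e q) 0) = y p - y q.
Proof.
rewrite /dotf; transitivity (\sum_t (y t * (t == p)%:R - y t * (t == q)%:R)).
  by apply: eq_bigr => t _; rewrite !mxE /= mulrBr.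
rewrite sumrB (sum1pt (a := p)) ?eqxx ?mulr1; last by move=> s /negbTE ->; rewrite mulr0.
rewrite (sum1pt (a := q)) ?eqxx ?mulr1 //; by move=> s /negbTE ->; rewrite mulr0.
Qed.

Lemma sgn_of (x : int) : x * x = 1 -> sgn (x == -1) = x.
Proof. by case/sq_one => ->. Qed.

Ltac zt injS h := rewrite h; [rewrite ?mul0r ?mulr0; lia | by rewrite (inj_eq injS) | by rewrite (inj_eq injS)].

Unset Implicit Arguments.

Theorem mainTheorem14 (b n : nat) (hb : (2 <= b)%N)
  (rho : 'I_n -> 'I_5 -> 'rV[int]_(5 * n)) :
  lattice_embedding_Qn b rho ->
  exists (P : 'M[int]_(5 * n)) (s1 : 'I_n -> bool) (s2 : 'I_n -> bool)
         (sigma1 sigma2 : 'S_n),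
    std_lattice_aut P /\
    forall i : 'I_n,
      [/\ rho i o0 *m P = std_e (eidx i o0) - std_e (eidx i o1),
          rho i o1 *m P = std_e (eidx i o2) - std_e (eidx i o3),
          rho i o2 *m P = std_e (eidx i o3) - std_e (eidx i o4) &
          rho i o3 *m P =
            sgn (s1 i) *: (std_e (eidx (sigma1 i) o0) + std_e (eidx (sigma1 i) o1))
          + sgn (s2 i) *: (std_e (eidx (sigma2 i) o2) + std_e (eidx (sigma2 i) o3)
                           + std_e (eidx (sigma2 i) o4))].
Proof.
move=> [_ H0]; have H : formH b rho := H0; clear H0.
have [S hS] := fin_all_exists (local_struct H).
have own : forall i l, exists2 k : 'I_5, (val k < 3)%N & rho i k 0 (S i l) != 0.
  move=> i l; case: (hS i) => _ [a1 a2 _] [b1 b2 _] [c1 c2 _].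
  case: (ord5_cases l) => [->|[->|[->|[->|->]]]].
  - by exists o0 => //; apply: sq1_nz.
  - by exists o0 => //; apply: sq1_nz.
  - by exists o1 => //; apply: sq1_nz.
  - by exists o1 => //; apply: sq1_nz.
  - by exists o2 => //; apply: sq1_nz.
have zc : forall i j k l, i != j -> (val k < 3)%N -> rho i k 0 (S j l) = 0.
  move=> i j k l ij hk; apply/eqP/negP => /negP nz.
  have [l' hl' nz'] := own j l.
  exact: (cross H ij hk hl' nz nz').
have Sinj : forall i j k l, S i k = S j l -> i = j /\ k = l.
  move=> i j k l e; case: (eqVneq i j) => [ij|ij].
    by subst j; split => //; case: (hS i) => inj _ _ _; apply: inj.
  exfalso; have [k' hk' nz] := own i k.
  by move: nz; rewrite e zc ?eqxx.
pose src (c : 'I_(5 * n)) := S (deci c) (deck c).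
have src_inj : injective src.
  move=> c c' /Sinj [e1 e2]; by rewrite -(eidx_dec c) -(eidx_dec c') e1 e2.
pose pi := perm src_inj.
pose epsf (i : 'I_n) (k : 'I_5) : int :=
  nth 0 [:: rho i o0 0 (S i o0); - rho i o0 0 (S i o1); rho i o1 0 (S i o2);
            - rho i o1 0 (S i o3); - rho i o2 0 (S i o4)] k.
pose eps (c : 'I_(5 * n)) := epsf (deci c) (deck c).
have eps1 : forall c, eps c * eps c = 1.
  move=> c; rewrite /eps /epsf; move: (deci c) (deck c) => i k.
  case: (hS i) => _ [a1 a2 _] [b1 b2 _] [c1 c2 _].
  by case: (ord5_cases k) => [->|[->|[->|[->|->]]]] /=; rewrite ?mulrNN.
exists (Pm pi eps).
have key : forall (x : 'rV[int]_(5 * n)) j l,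
    (x *m Pm pi eps) 0 (eidx j l) = x 0 (S j l) * epsf j l.
  by move=> x j l; rewrite mulPm permE /src /eps deci_eidx deck_eidx.
have e1 : forall i, rho i o0 *m Pm pi eps = std_e (eidx i o0) - std_e (eidx i o1).
  move=> i; apply/rowP => c; rewrite -(eidx_dec c); move: (deci c) (deck c) => j l.
  rewrite key !mxE !eidx_eq /=.
  case: (eqVneq j i) => [->|ji]; last first.
    by rewrite zc 1?eq_sym //; rewrite /=; lia.
  have injS : injective (S i) by case: (hS i).
  case: (hS i) => _ [a1 a2 a3] [b1 b2 b3] [c1 c2 c3].
  rewrite /epsf.
  case: (ord5_cases l) => [->|[->|[->|[->|->]]]] /=;
    rewrite ?mulrN; first [lia | rewrite mulrC c2; lia | zt injS a3 | zt injS b3 | zt injS c3].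
have e2 : forall i, rho i o1 *m Pm pi eps = std_e (eidx i o2) - std_e (eidx i o3).
  move=> i; apply/rowP => c; rewrite -(eidx_dec c); move: (deci c) (deck c) => j l.
  rewrite key !mxE !eidx_eq /=.
  case: (eqVneq j i) => [->|ji]; last first.
    by rewrite zc 1?eq_sym //; rewrite /=; lia.
  have injS : injective (S i) by case: (hS i).
  case: (hS i) => _ [a1 a2 a3] [b1 b2 b3] [c1 c2 c3].
  rewrite /epsf.
  case: (ord5_cases l) => [->|[->|[->|[->|->]]]] /=;
    rewrite ?mulrN; first [lia | rewrite mulrC c2; lia | zt injS a3 | zt injS b3 | zt injS c3].
have e3 : forall i, rho i o2 *m Pm pi eps = std_e (eidx i o3) - std_e (eidx i o4).
  move=> i; apply/rowP => c; rewrite -(eidx_dec c); move: (deci c) (deck c) => j l.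
  rewrite key !mxE !eidx_eq /=.
  case: (eqVneq j i) => [->|ji]; last first.
    by rewrite zc 1?eq_sym //; rewrite /=; lia.
  have injS : injective (S i) by case: (hS i).
  case: (hS i) => _ [a1 a2 a3] [b1 b2 b3] [c1 c2 c3].
  rewrite /epsf.
  case: (ord5_cases l) => [->|[->|[->|[->|->]]]] /=;
    rewrite ?mulrN; first [lia | rewrite mulrC c2; lia | zt injS a3 | zt injS b3 | zt injS c3].
pose y i := (rho i o3 *m Pm pi eps) 0.
have orth : forall i j k, (val k < 3)%N -> dotf (y i) ((rho j k *m Pm pi eps) 0) = 0.
  move=> i j k hk; rewrite /y dot_Pm //; case: (eqVneq i j) => [<-|ij]; last exact: Ddiff.
  by rewrite (Dsame H); case: (ord5_cases k) hk => [->|[->|[->|[->|->]]]] //; pq.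
have shy : forall i, shape (y i).
  move=> i; have h1 := fun j => orth i j o0 isT; have h2 := fun j => orth i j o1 isT.
  have h3 := fun j => orth i j o2 isT.
  split => j.
  - by move: (h1 j); rewrite e1 dot_ee; lia.
  - by move: (h2 j); rewrite e2 dot_ee; lia.
  - by move: (h2 j) (h3 j); rewrite e2 e3 !dot_ee; lia.
have yy : forall i, dotf (y i) (y i) = 5 by move=> i; rewrite /y dot_Pm // (Dsame H); pq.
have yy' : forall i i', i != i' -> dotf (y i) (y i') = 0.
  by move=> i i' ne; rewrite /y dot_Pm // (Ddiff H).
have : forall i, exists p : 'I_n * 'I_n, shdata (y i) p.1 p.2.
  by move=> i; have [j1 [j2 h]] := v4_shape (shy i) (yy i); exists (j1, j2).
case/fin_all_exists => F hF.
have s1inj : injective (fun i => (F i).1).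
  move=> i i' e; apply/eqP/negPn/negP => ne.
  have [h _] := sig_inj (shy i) (shy i') (hF i) (hF i') (yy' i i' ne).
  by rewrite e eqxx in h.
have s2inj : injective (fun i => (F i).2).
  move=> i i' e; apply/eqP/negPn/negP => ne.
  have [_ h] := sig_inj (shy i) (shy i') (hF i) (hF i') (yy' i i' ne).
  by rewrite e eqxx in h.
exists (fun i => y i (eidx (F i).1 o0) == -1), (fun i => y i (eidx (F i).2 o2) == -1).
exists (perm s1inj), (perm s2inj).
split; first exact: aut_Pm.
move=> i; split => //.
apply/rowP => c; rewrite -(eidx_dec c); move: (deci c) (deck c) => j l.
change ((rho i o3 *m Pm pi eps) 0) with (y i).
set Y := y i (eidx j l).
rewrite !mxE !eidx_eq !permE /=.
case: (hF i) => a1 a2 b1 b2; case: (shy i) => h1 h2 h3.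
rewrite !sgn_of //.
case: (ord5_cases l) => [e|[e|[e|[e|e]]]]; rewrite /Y e /= ?h1 ?h2 ?h3;
  (case: (eqVneq j (F i).1) => [q1|n1]; [| rewrite ?(a2 _ n1)]);
  (case: (eqVneq j (F i).2) => [q2|n2]; [| rewrite ?(b2 _ n2)]) => /=;
  try subst j; try rewrite q2; lia.
Qed.
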